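(* Let $\mathsf{CMP}$ be the set of linear processes $P$ that are complete, let $\mathsf{LF}$ be the set of lock-free processes, and let $\mathsf{PSL} = \{P \in \mathsf{CMP} \mid \mathrm{psl}(P)\}$ be the set of potentially self-locking complete processes (all notions as defined in the context). Then $$\mathsf{PSL} = \mathsf{CMP} \setminus \mathsf{LF}.$$
   Context: Fix a countable set $\mathcal{N}$ of names $a,b,\dots$ and a disjoint set $\overline{\mathcal{N}}$ of co-names with a bijection $a\mapsto \bar a$, extended by $\bar{\bar a}=a$; actions $\alpha$ range over $\mathcal{N}\cup\overline{\mathcal{N}}$. Processes are given by $P,Q,R ::= \mathbf{0} \mid \alpha.P \mid P \,|\, Q$ (finite CCS with prefix and parallel composition only). Evaluation contexts: $E ::= [-] \mid P\,|\,E \mid E\,|\,P$; process contexts: $C ::= [-] \mid P\,|\,C \mid C\,|\,P \mid \alpha.C$; $C[Q]$ denotes filling the hole with $Q$. Structural congruence $\equiv$ is the smallest congruence with $P|\mathbf{0}\equiv P$, $P|Q\equiv Q|P$, $P|(Q|R)\equiv (P|Q)|R$. Reduction $\to$ is the smallest relation with $a.P \,|\, \bar a.Q \to P\,|\,Q$, closed under evaluation contexts ($P\to P'$ implies $E[P]\to E[P']$) and under $\equiv$ ($P\equiv P'\to Q'\equiv Q$ implies $P\to Q$); $\to^*$ is its reflexive–transitive closure. A process is linear if no name occurs more than once as an input $a$ and no more than once as an output $\bar a$ (so each name occurs at most twice). Predicates: $\mathrm{in}(a,P)$ iff $\exists P',P''.\ P\equiv P'\,|\,a.P''$; $\mathrm{out}(a,P)$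 iff $\exists P',P''.\ P\equiv P'\,|\,\bar a.P''$; $\mathrm{sync}(a,P)$ iff $\mathrm{in}(a,P)$ and $\mathrm{out}(a,P)$; $\mathrm{wait}(a,P)$ iff exactly one of $\mathrm{in}(a,P)$, $\mathrm{out}(a,P)$ holds. Lock-freedom: $\mathrm{lf}(P)$ iff for all $Q$ and $a$, if $P\to^* Q$ and $\mathrm{wait}(a,Q)$ then there exists $R$ with $Q\to^* R$ and $\mathrm{sync}(a,R)$; $\mathsf{LF}=\{P\mid \mathrm{lf}(P)\}$. Completeness: $\mathrm{cin}(a,P)$ iff there exist a process context $C$ and $Q$ with $P\equiv C[Q]$ and $\mathrm{in}(a,Q)$; $\mathrm{cout}(a,P)$ likewise with $\mathrm{out}(a,Q)$; $\mathrm{complete}(P)$ iff for all $a$, $\mathrm{cin}(a,P) \Leftrightarrow \mathrm{cout}(a,P)$; $\mathsf{CMP}$ is the set of linear processes $P$ with $\mathrm{complete}(P)$. Deadlock: $\mathrm{dl}(P)$ iff there is no $Q$ with $P\to Q$ and $P\not\equiv\mathbf{0}$. Top-completeness: $\mathrm{tcomplete}(P)$ iff for all $a$, ($\mathrm{in}(a,P)$ implies $\mathrm{cout}(a,P)$) and ($\mathrm{out}(a,P)$ implies $\mathrm{cin}(a,P)$). Self-deadlock: $\mathrm{sdl}(P)$ iff $\mathrm{dl}(P)$ and $\mathrm{tcomplete}(P)$. Potential self-locking: $\mathrm{psl}(P)$ iff there exist an evaluation context $E$ and a process $Q$ with $P\to^* E[Q]$ and $\mathrm{sdl}(Q)$.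 *)

(* Defs.v *)
From Stdlib Require Import Arith Relations.

Definition name := nat.

Inductive action : Type :=
| Inp : name -> action
| Out : name -> action.

Definition co (al : action) : action :=
  match al with Inp a => Out a | Out a => Inp a end.

Inductive proc : Type :=
| Nil : proc
| Pre : action -> proc -> proc
| Par : proc -> proc -> proc.

Inductive ectx : Type :=
| EHole : ectx
| EParL : proc -> ectx -> ectx
| EParR : ectx -> proc -> ectx.

Fixpoint efill (E : ectx) (Q : proc) : proc :=
  match E with
  | EHole => Q
  | EParL P E' => Par P (efill E' Q)
  | EParR E' P => Par (efill E' Q) P
  end.

Inductive pctx : Type :=
| CHole : pctx
| CParL : proc -> pctx -> pctx
| CParR : pctx -> proc -> pctx
| CPre : action -> pctx -> pctx.

Fixpoint cfill (C : pctx) (Q : proc) : proc :=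
  match C with
  | CHole => Q
  | CParL P C' => Par P (cfill C' Q)
  | CParR C' P => Par (cfill C' Q) P
  | CPre al C' => Pre al (cfill C' Q)
  end.

Inductive scong : proc -> proc -> Prop :=
| sc_nil : forall P, scong (Par P Nil) P
| sc_comm : forall P Q, scong (Par P Q) (Par Q P)
| sc_assoc : forall P Q R, scong (Par P (Par Q R)) (Par (Par P Q) R)
| sc_refl : forall P, scong P P
| sc_sym : forall P Q, scong P Q -> scong Q P
| sc_trans : forall P Q R, scong P Q -> scong Q R -> scong P R
| sc_pre : forall al P Q, scong P Q -> scong (Pre al P) (Pre al Q)
| sc_parL : forall P Q R, scong P Q -> scong (Par R P) (Par R Q)
| sc_parR : forall P Q R, scong P Q -> scong (Par P R) (Par Q R).

Inductive red : proc -> proc -> Prop :=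
| r_comm : forall a P Q, red (Par (Pre (Inp a) P) (Pre (Out a) Q)) (Par P Q)
| r_ctx : forall E P P', red P P' -> red (efill E P) (efill E P')
| r_struct : forall P P' Q' Q, scong P P' -> red P' Q' -> scong Q' Q -> red P Q.

Definition reds : proc -> proc -> Prop := clos_refl_trans proc red.

Definition action_eqb (x y : action) : bool :=
  match x, y with
  | Inp a, Inp b => Nat.eqb a b
  | Out a, Out b => Nat.eqb a b
  | _, _ => false
  end.

Fixpoint occ (al : action) (P : proc) : nat :=
  match P with
  | Nil => 0
  | Pre b P' => (if action_eqb al b then 1 else 0) + occ al P'
  | Par P1 P2 => occ al P1 + occ al P2
  end.

Definition linear (P : proc) : Prop :=
  forall a, occ (Inp a) P <= 1 /\ occ (Out a) P <= 1.

Definition in_ (a : name) (P : proc) : Prop :=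
  exists P' P'', scong P (Par P' (Pre (Inp a) P'')).
Definition out_ (a : name) (P : proc) : Prop :=
  exists P' P'', scong P (Par P' (Pre (Out a) P'')).
Definition sync (a : name) (P : proc) : Prop := in_ a P /\ out_ a P.
Definition wait (a : name) (P : proc) : Prop :=
  (in_ a P /\ ~ out_ a P) \/ (~ in_ a P /\ out_ a P).

Definition lf (P : proc) : Prop :=
  forall Q a, reds P Q -> wait a Q -> exists R, reds Q R /\ sync a R.

Definition cin (a : name) (P : proc) : Prop :=
  exists C Q, scong P (cfill C Q) /\ in_ a Q.
Definition cout (a : name) (P : proc) : Prop :=
  exists C Q, scong P (cfill C Q) /\ out_ a Q.
Definition complete (P : proc) : Prop := forall a, cin a P <-> cout a P.
Definition CMP (P : proc) : Prop := linear P /\ complete P.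

Definition dl (P : proc) : Prop := (~ exists Q, red P Q) /\ ~ scong P Nil.
Definition tcomplete (P : proc) : Prop :=
  forall a, (in_ a P -> cout a P) /\ (out_ a P -> cin a P).
Definition sdl (P : proc) : Prop := dl P /\ tcomplete P.
Definition psl (P : proc) : Prop :=
  exists E Q, reds P (efill E Q) /\ sdl Q.

Definition PSL (P : proc) : Prop := CMP P /\ psl P.

(* Main.v *)
Require Import Defs.
From Stdlib Require Import Arith Lia Relations Classical Setoid.

Lemma aeq_spec x y : action_eqb x y = true <-> x = y.
Proof. destruct x, y; simpl; rewrite ?Nat.eqb_eq; split; intro H; congruence. Qed.

Lemma aeq_refl x : action_eqb x x = true.
Proof. apply aeq_spec; reflexivity. Qed.

Definition ind (x y : action) : nat := if action_eqb x y then 1 else 0.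

Fixpoint topc (al : action) (P : proc) : nat :=
  match P with
  | Nil => 0
  | Pre b _ => if action_eqb al b then 1 else 0
  | Par P1 P2 => topc al P1 + topc al P2
  end.

Fixpoint occ2 (g al : action) (P : proc) : nat :=
  match P with
  | Nil => 0
  | Pre b P' => (if action_eqb g b then occ al P' else 0) + occ2 g al P'
  | Par P1 P2 => occ2 g al P1 + occ2 g al P2
  end.

Fixpoint size (P : proc) : nat :=
  match P with Nil => 0 | Pre _ P' => S (size P') | Par P1 P2 => size P1 + size P2 end.

Lemma scong_occ al P Q : scong P Q -> occ al P = occ al Q.
Proof. induction 1; simpl; lia. Qed.
Lemma scong_topc al P Q : scong P Q -> topc al P = topc al Q.
Proof. induction 1; simpl; lia. Qed.
Lemma scong_size P Q : scong P Q -> size P = size Q.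
Proof. induction 1; simpl; lia. Qed.
Lemma scong_occ2 g al P Q : scong P Q -> occ2 g al P = occ2 g al Q.
Proof.
  induction 1; simpl; try lia.
  match goal with H : scong ?P ?Q |- _ => rewrite (scong_occ al P Q H) end; lia.
Qed.

Definition redf P P' := exists b X Y V,
  scong P (Par (Par (Pre (Inp b) X) (Pre (Out b) Y)) V) /\ scong P' (Par (Par X Y) V).

Lemma sc_ctx M A V Q : scong M (Par A V) ->
  scong (Par Q M) (Par A (Par V Q)) /\ scong (Par M Q) (Par A (Par V Q)).
Proof.
  intro H.
  assert (H2 : scong (Par M Q) (Par A (Par V Q))).
  { eapply sc_trans. apply sc_parR, H. apply sc_sym, sc_assoc. }
  split; auto. eapply sc_trans. apply sc_comm. exact H2.
Qed.

Fixpoint vfill (E : ectx) (V : proc) : proc :=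
  match E with
  | EHole => V
  | EParL Q E' => Par (vfill E' V) Q
  | EParR E' Q => Par (vfill E' V) Q
  end.

Lemma efill_sc E M A V : scong M (Par A V) -> scong (efill E M) (Par A (vfill E V)).
Proof.
  induction E; simpl; intro H; auto.
  - apply (sc_ctx _ _ _ p (IHE H)).
  - apply (sc_ctx _ _ _ p (IHE H)).
Qed.

Lemma red_redf P P' : red P P' -> redf P P'.
Proof.
  induction 1.
  - exists a, P, Q, Nil. split; apply sc_sym, sc_nil.
  - destruct IHred as (b & X & Y & V & G1 & G2).
    exists b, X, Y, (vfill E V). split; apply efill_sc; auto.
  - destruct IHred as (b & X & Y & V & G1 & G2).
    exists b, X, Y, V. split.
    + eapply sc_trans; eauto.
    + eapply sc_trans; [apply sc_sym; eauto| auto].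
Qed.

Lemma redf_red P P' : redf P P' -> red P P'.
Proof.
  intros (b & X & Y & V & H1 & H2).
  eapply r_struct; [exact H1 | | apply sc_sym; exact H2].
  exact (r_ctx (EParR EHole V) _ _ (r_comm b X Y)).
Qed.

Lemma red_eqs P P' : red P P' -> exists b X Y V,
  (forall al, occ al P = ind al (Inp b) + ind al (Out b) + occ al X + occ al Y + occ al V) /\
  (forall al, occ al P' = occ al X + occ al Y + occ al V) /\
  (forall al, topc al P = ind al (Inp b) + ind al (Out b) + topc al V) /\
  (forall al, topc al P' = topc al X + topc al Y + topc al V) /\
  (forall g al, occ2 g al P = ind g (Inp b) * occ al X + ind g (Out b) * occ al Y
                 + occ2 g al X + occ2 g al Y + occ2 g al V) /\
  (forall g al, occ2 g al P' = occ2 g al X + occ2 g al Y + occ2 g al V) /\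
  size P = S (S (size X + size Y + size V)) /\ size P' = size X + size Y + size V.
Proof.
  intro H. apply red_redf in H. destruct H as (b & X & Y & V & H1 & H2).
  exists b, X, Y, V.
  repeat split; intros;
  rewrite ?(scong_occ _ _ _ H1), ?(scong_occ _ _ _ H2), ?(scong_topc _ _ _ H1),
    ?(scong_topc _ _ _ H2), ?(scong_occ2 _ _ _ _ H1), ?(scong_occ2 _ _ _ _ H2),
    ?(scong_size _ _ H1), ?(scong_size _ _ H2); simpl; unfold ind;
  try (destruct (action_eqb g (Inp b)), (action_eqb g (Out b))); lia.
Qed.

Lemma topc_split al P : topc al P >= 1 -> exists P1 P2, scong P (Par P1 (Pre al P2)).
Proof.
  induction P as [|a P IH|P1 IH1 P2 IH2]; simpl.
  - lia.
  - destruct (action_eqb al a) eqn:E; [|lia]. intros _.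
    apply aeq_spec in E; subst. exists Nil, P.
    eapply sc_trans; [apply sc_sym, sc_nil| apply sc_comm].
  - intro H. destruct (Nat.le_gt_cases 1 (topc al P1)) as [H1|H1].
    + destruct (IH1 H1) as (A & B & HA). exists (Par A P2), B.
      eapply sc_trans. apply sc_parR, HA.
      eapply sc_trans. apply sc_sym, sc_assoc.
      eapply sc_trans. apply sc_parL, sc_comm. apply sc_assoc.
    + destruct (IH2 ltac:(lia)) as (A & B & HA). exists (Par P1 A), B.
      eapply sc_trans. apply sc_parL, HA. apply sc_assoc.
Qed.

Lemma in_topc a P : in_ a P <-> topc (Inp a) P >= 1.
Proof.
  split.
  - intros (A & B & H). rewrite (scong_topc _ _ _ H). simpl. rewrite Nat.eqb_refl. lia.
  - intro H. exact (topc_split _ _ H).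
Qed.
Lemma out_topc a P : out_ a P <-> topc (Out a) P >= 1.
Proof.
  split.
  - intros (A & B & H). rewrite (scong_topc _ _ _ H). simpl. rewrite Nat.eqb_refl. lia.
  - intro H. exact (topc_split _ _ H).
Qed.

Lemma topc_le_occ al P : topc al P <= occ al P.
Proof. induction P; simpl; try destruct (action_eqb al a); lia. Qed.

Lemma occ_cfill al C Q : occ al Q <= occ al (cfill C Q).
Proof. induction C; simpl; lia. Qed.

Lemma occ_pctx al P : occ al P >= 1 -> exists C R, P = cfill C (Pre al R).
Proof.
  induction P as [|a P IH|P1 IH1 P2 IH2]; simpl.
  - lia.
  - destruct (action_eqb al a) eqn:E.
    + intros _. apply aeq_spec in E; subst. exists CHole, P; reflexivity.
    + intro H. destruct (IH H) as (C & R & HC). exists (CPre a C), R. simpl. congruence.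
  - intro H. destruct (Nat.le_gt_cases 1 (occ al P1)) as [H1|H1].
    + destruct (IH1 H1) as (C & R & HC). exists (CParR C P2), R. simpl. congruence.
    + destruct (IH2 ltac:(lia)) as (C & R & HC). exists (CParL P1 C), R. simpl. congruence.
Qed.

Lemma cin_occ a P : cin a P <-> occ (Inp a) P >= 1.
Proof.
  split.
  - intros (C & Q & H & Hin). rewrite (scong_occ _ _ _ H). apply in_topc in Hin.
    pose proof (topc_le_occ (Inp a) Q). pose proof (occ_cfill (Inp a) C Q). lia.
  - intro H. destruct (occ_pctx _ _ H) as (C & R & HC). subst.
    exists C, (Pre (Inp a) R). split. apply sc_refl. apply in_topc. simpl.
    rewrite Nat.eqb_refl. lia.
Qed.
Lemma cout_occ a P : cout a P <-> occ (Out a) P >= 1.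
Proof.
  split.
  - intros (C & Q & H & Hin). rewrite (scong_occ _ _ _ H). apply out_topc in Hin.
    pose proof (topc_le_occ (Out a) Q). pose proof (occ_cfill (Out a) C Q). lia.
  - intro H. destruct (occ_pctx _ _ H) as (C & R & HC). subst.
    exists C, (Pre (Out a) R). split. apply sc_refl. apply out_topc. simpl.
    rewrite Nat.eqb_refl. lia.
Qed.

Lemma topc_efill al E Q : topc al Q <= topc al (efill E Q).
Proof. induction E; simpl; lia. Qed.
Lemma occ2_efill g al E Q : occ2 g al Q <= occ2 g al (efill E Q).
Proof. induction E; simpl; lia. Qed.

Lemma can_red h Q : topc h Q >= 1 -> topc (co h) Q >= 1 -> exists Q', red Q Q'.
Proof.
  assert (Hgen : forall a Q, topc (Inp a) Q >= 1 -> topc (Out a) Q >= 1 -> exists Q', red Q Q').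
  { clear. intros a Q Hi Ho. destruct (topc_split _ _ Hi) as (Q1 & X & H1).
    rewrite (scong_topc _ _ _ H1) in Ho. simpl in Ho.
    destruct (topc_split (Out a) Q1 ltac:(lia)) as (Q2 & Y & H2).
    exists (Par (Par X Y) Q2). apply redf_red. exists a, X, Y, Q2. split; [|apply sc_refl].
    eapply sc_trans. exact H1.
    eapply sc_trans. apply sc_parR, H2.
    eapply sc_trans. apply sc_comm.
    eapply sc_trans. apply sc_parL, sc_comm. apply sc_assoc. }
  destruct h as [a|a]; simpl; intros H1 H2; eauto.
Qed.

Lemma nil_or_top P : scong P Nil \/ exists al, topc al P >= 1.
Proof.
  induction P as [|a P IH|P1 IH1 P2 IH2].
  - left; apply sc_refl.
  - right. exists a. simpl. rewrite aeq_refl. lia.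
  - destruct IH1 as [H1|(al & H1)]; [destruct IH2 as [H2|(al & H2)]|].
    + left. eapply sc_trans. apply sc_parR, H1.
      eapply sc_trans. apply sc_parL, H2. apply sc_nil.
    + right. exists al. simpl. lia.
    + right. exists al. simpl. lia.
Qed.

Definition lin P := forall al, occ al P <= 1.
Lemma linear_lin P : linear P <-> lin P.
Proof. split; intros H; [intros [a|a]; apply H | intro a; split; apply H]. Qed.

Lemma red_lin P P' : red P P' -> lin P -> lin P'.
Proof.
  intros H HL al. destruct (red_eqs _ _ H) as (b & X & Y & V & Ho & Ho' & _).
  specialize (HL al). rewrite Ho in HL. rewrite Ho'. lia.
Qed.

Lemma reds_lin P P' : reds P P' -> lin P -> lin P'.
Proof. induction 1; eauto using red_lin. Qed.

Lemma topc_step h R R' : topc h R >= 1 -> red R R' -> topc h R' >= 1 \/ topc (co h) R >= 1.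
Proof.
  intros H Hr. destruct (red_eqs _ _ Hr) as (b & X & Y & V & _ & _ & Ht & Ht' & _).
  destruct (Nat.le_gt_cases 1 (topc h R')) as [H1|H1]; [left; auto|right].
  rewrite Ht in H. rewrite Ht' in H1. unfold ind in H.
  destruct (action_eqb h (Inp b)) eqn:E1.
  - apply aeq_spec in E1; subst. simpl. rewrite Ht. unfold ind. simpl. rewrite Nat.eqb_refl. lia.
  - destruct (action_eqb h (Out b)) eqn:E2.
    + apply aeq_spec in E2; subst. simpl. rewrite Ht. unfold ind. simpl. rewrite Nat.eqb_refl. lia.
    + lia.
Qed.

Lemma run h Q : topc h Q >= 1 ->
  (forall R, reds Q R -> ~ (topc h R >= 1 /\ topc (co h) R >= 1)) ->
  exists S, reds Q S /\ topc h S >= 1 /\ ~ exists T, red S T.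
Proof.
  remember (size Q) as n. revert Q Heqn.
  induction n as [n IH] using (well_founded_induction lt_wf).
  intros Q Hn Hh Hno.
  destruct (classic (exists T, red Q T)) as [[T HT]|Hst].
  2: { exists Q; repeat split; auto. apply rt_refl. }
  destruct (topc_step h Q T Hh HT) as [H|H].
  - destruct (red_eqs _ _ HT) as (b & X & Y & V & _ & _ & _ & _ & _ & _ & Hs & Hs').
    destruct (IH (size T) ltac:(lia) T eq_refl H) as (S & HTS & HS & Hst).
    + intros R HR. apply Hno. eapply rt_trans. apply rt_step, HT. exact HR.
    + exists S. split; auto. eapply rt_trans. apply rt_step, HT. exact HTS.
  - exfalso. apply (Hno Q (rt_refl _ _ _)). split; auto.
Qed.

Definition bal P := forall a, occ (Inp a) P = occ (Out a) P.

Lemma red_bal P P' : red P P' -> bal P -> bal P'.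
Proof.
  intros H HB a. destruct (red_eqs _ _ H) as (b & X & Y & V & Ho & Ho' & _).
  specialize (HB a). rewrite !Ho in HB. rewrite !Ho'. unfold ind in HB. simpl in HB.
  destruct (a =? b); lia.
Qed.
Lemma reds_bal P P' : reds P P' -> bal P -> bal P'.
Proof. induction 1; eauto using red_bal. Qed.

Lemma cmp_bal P : CMP P -> bal P.
Proof.
  intros [Hl Hc] a. destruct (Hl a) as [H1 H2]. destruct (Hc a) as [Hc1 Hc2].
  rewrite cin_occ, cout_occ in Hc1, Hc2.
  destruct (Nat.le_gt_cases 1 (occ (Inp a) P)) as [E1|E1].
  - specialize (Hc1 E1). lia.
  - destruct (Nat.le_gt_cases 1 (occ (Out a) P)) as [E2|E2].
    + specialize (Hc2 E2). lia.
    + lia.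
Qed.

Lemma dir2 P : CMP P -> ~ lf P -> psl P.
Proof.
  intros HC Hnlf. pose proof (cmp_bal P HC) as HB.
  unfold lf in Hnlf. apply not_all_ex_not in Hnlf as [Q Hq].
  apply not_all_ex_not in Hq as [a Ha].
  apply imply_to_and in Ha as [HPQ Ha]. apply imply_to_and in Ha as [Hw Hns].
  assert (Hno : forall R, reds Q R -> ~ sync a R) by (intros R HR Hs; apply Hns; eauto).
  assert (Hh : exists h, topc h Q >= 1 /\
            forall R, reds Q R -> ~ (topc h R >= 1 /\ topc (co h) R >= 1)).
  { destruct Hw as [[Hi _]|[_ Ho]].
    - exists (Inp a). split. apply in_topc; auto.
      intros R HR [H1 H2]. apply (Hno R HR). split; [apply in_topc|apply out_topc]; auto.
    - exists (Out a). split. apply out_topc; auto.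
      intros R HR [H1 H2]. apply (Hno R HR). split; [apply in_topc|apply out_topc]; auto. }
  destruct Hh as (h & Hh1 & Hh2).
  destruct (run h Q Hh1 Hh2) as (S & HQS & HS & Hst).
  assert (HBS : bal S) by (eapply reds_bal; [|exact HB]; eapply rt_trans; eauto).
  exists EHole, S. split. simpl. eapply rt_trans; eauto.
  split. split. exact Hst. intro Hn. rewrite (scong_topc h _ _ Hn) in HS. simpl in HS. lia.
  intro b. split; intro H.
  - apply in_topc in H. apply cout_occ. rewrite <- HBS. pose proof (topc_le_occ (Inp b) S). lia.
  - apply out_topc in H. apply cin_occ. rewrite HBS. pose proof (topc_le_occ (Out b) S). lia.
Qed.

Lemma occ2_zero g al P : occ g P = 0 -> occ2 g al P = 0.
Proof.
  induction P as [|a P IH|P1 IH1 P2 IH2]; simpl; auto.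
  - destruct (action_eqb g a); intro H; [lia|]. rewrite IH; lia.
  - intro H. rewrite IH1, IH2; lia.
Qed.

Lemma topc_occ2_le g al P : occ g P <= 1 -> topc al P + occ2 g al P <= occ al P.
Proof.
  induction P as [|a P IH|P1 IH1 P2 IH2]; simpl; auto.
  - destruct (action_eqb g a); intro H.
    + rewrite (occ2_zero g al P ltac:(lia)). destruct (action_eqb al a); lia.
    + specialize (IH H). destruct (action_eqb al a); lia.
  - intro H. specialize (IH1 ltac:(lia)). specialize (IH2 ltac:(lia)). lia.
Qed.

Lemma guard al P : occ al P >= 1 -> topc al P >= 1 \/ exists g, topc g P >= 1 /\ occ2 g al P >= 1.
Proof.
  induction P as [|a P IH|P1 IH1 P2 IH2]; simpl.
  - lia.
  - destruct (action_eqb al a) eqn:E; intro H; [left; lia|].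
    right. exists a. rewrite aeq_refl. lia.
  - intro H. destruct (Nat.le_gt_cases 1 (occ al P1)) as [H1|H1].
    + destruct (IH1 H1) as [H2|(g & H2 & H3)]; [left; lia| right; exists g; lia].
    + destruct (IH2 ltac:(lia)) as [H2|(g & H2 & H3)]; [left; lia| right; exists g; lia].
Qed.

Section Dir1.
Variable Q : proc.
Hypothesis Hdl : dl Q.
Hypothesis Htc : tcomplete Q.

Definition K R := forall g, topc g Q >= 1 ->
  topc g R >= 1 /\ forall al, occ2 g al Q <= occ2 g al R.

Lemma partner_occ h : topc h Q >= 1 -> occ (co h) Q >= 1.
Proof.
  destruct h as [a|a]; simpl; intro H.
  - apply in_topc in H. apply cout_occ. apply (Htc a), H.
  - apply out_topc in H. apply cin_occ. apply (Htc a), H.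
Qed.

Lemma no_partner R : K R -> lin R -> forall h, topc h Q >= 1 -> topc (co h) R = 0.
Proof.
  intros HK HL h Hh.
  destruct (Nat.eq_dec (topc (co h) R) 0) as [|Hne]; auto. exfalso.
  destruct (guard _ _ (partner_occ h Hh)) as [Ht|(g & Hg & Ho)].
  - destruct Hdl as [Hd _]. apply Hd. exact (can_red h Q Hh Ht).
  - destruct (HK g Hg) as [_ Ho2]. specialize (Ho2 (co h)).
    pose proof (topc_occ2_le g (co h) R (HL g)). specialize (HL (co h)). lia.
Qed.

Lemma K_red R R' : K R -> lin R -> red R R' -> K R'.
Proof.
  intros HK HL Hr.
  destruct (red_eqs _ _ Hr) as (b & X & Y & V & _ & _ & Ht & Ht' & Hc & Hc' & _).
  assert (Hib : topc (Inp b) R >= 1) by (rewrite Ht; unfold ind; rewrite aeq_refl; lia).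
  assert (Hob : topc (Out b) R >= 1) by (rewrite Ht; unfold ind; rewrite aeq_refl; lia).
  assert (Q1 : topc (Inp b) Q = 0).
  { destruct (Nat.eq_dec (topc (Inp b) Q) 0) as [|Hn]; auto.
    pose proof (no_partner R HK HL (Inp b) ltac:(lia)). simpl in *. lia. }
  assert (Q2 : topc (Out b) Q = 0).
  { destruct (Nat.eq_dec (topc (Out b) Q) 0) as [|Hn]; auto.
    pose proof (no_partner R HK HL (Out b) ltac:(lia)). simpl in *. lia. }
  intros g Hg.
  assert (I1 : ind g (Inp b) = 0).
  { unfold ind. destruct (action_eqb g (Inp b)) eqn:E; auto. apply aeq_spec in E; subst; lia. }
  assert (I2 : ind g (Out b) = 0).
  { unfold ind. destruct (action_eqb g (Out b)) eqn:E; auto. apply aeq_spec in E; subst; lia. }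
  destruct (HK g Hg) as [H1 H2]. split.
  - rewrite Ht'. rewrite Ht, I1, I2 in H1. lia.
  - intro al. specialize (H2 al). rewrite Hc, I1, I2 in H2. rewrite Hc'. lia.
Qed.

Lemma K_reds R R' : reds R R' -> K R -> lin R -> K R' /\ lin R'.
Proof.
  induction 1; intros HK HL.
  - split. eapply K_red; eauto. eapply red_lin; eauto.
  - auto.
  - destruct (IHclos_refl_trans1 HK HL). auto.
Qed.
End Dir1.

Lemma dir1 P : PSL P -> ~ lf P.
Proof.
  intros [[Hlin Hcomp] (E & Q & HPW & [Hdl Htc])] Hlf.
  apply linear_lin in Hlin.
  destruct (nil_or_top Q) as [Hn|[h Hh]].
  { destruct Hdl as [_ Hd]. exact (Hd Hn). }
  set (W := efill E Q) in *.
  assert (HLW : lin W) by (eapply reds_lin; eauto).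
  assert (HKW : K Q W).
  { intros g Hg. unfold W. split. pose proof (topc_efill g E Q). lia.
    intro al. apply occ2_efill. }
  assert (Hreach : forall R, reds W R -> topc h R >= 1 /\ topc (co h) R = 0).
  { intros R HR. destruct (K_reds Q Hdl Htc W R HR HKW HLW) as [HK HL].
    split. apply (HK h Hh). apply (no_partner Q Hdl Htc R HK HL h Hh). }
  destruct h as [a|a].
  - assert (Hw : wait a W).
    { left. destruct (Hreach W (rt_refl _ _ _)) as [H1 H2]. simpl in H2.
      split. apply in_topc; auto. rewrite out_topc. lia. }
    destruct (Hlf W a HPW Hw) as (R & HR & [_ Ho]).
    apply out_topc in Ho. destruct (Hreach R HR) as [_ H2]. simpl in H2. lia.
  - assert (Hw : wait a W).
    { right. destruct (Hreach W (rt_refl _ _ _)) as [H1 H2]. simpl in H2.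
      split. rewrite in_topc. lia. apply out_topc; auto. }
    destruct (Hlf W a HPW Hw) as (R & HR & [Hi _]).
    apply in_topc in Hi. destruct (Hreach R HR) as [_ H2]. simpl in H2. lia.
Qed.

Theorem theorem1 : forall P : proc, PSL P <-> (CMP P /\ ~ lf P).
Proof.
  intro P. split.
  - intro H. split. apply H. apply dir1, H.
  - intros [HC Hn]. split; auto. apply dir2; auto.
Qed.
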